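(* Let $n\ge2$ and let $\Gamma:\mathbb{C}^n\to\mathbb{C}^n$ be a homogeneous quadratic polynomial map with real coefficients such that $\Gamma(x)$ and $x$ are linearly dependent for every $x\in C$. Then there exist $b\in\mathbb{R}^n$ and a real linear functional $\lambda$ on $\mathbb{R}^n$ such that $\Gamma(x)=(x,x)\,b+\lambda(x)\,x$ for all $x$.
   Context: $(\cdot,\cdot)$ denotes the standard Euclidean inner product on $\mathbb{R}^n$, extended to $\mathbb{C}^n$ complex-bilinearly; $\lambda$ is extended complex-linearly. The *asymptotic cone* is $C=\{x\in\mathbb{C}^n:(x,x)=0\}$. *)

(* Defs.v *)
From HB Require Import structures.
From mathcomp Require Import all_boot all_order all_algebra.
From mathcomp.real_closed Require Import complex.
Set Implicit Arguments. Unset Strict Implicit. Unset Printing Implicit Defensive.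
Import Order.TTheory GRing.Theory Num.Theory.
Local Open Scope ring_scope.

(* Vectors of C^n are row vectors 'rV[R[i]]_n, R a real closed field
   (e.g. the reals); a real number r is embedded as Complex r 0. *)
Definition rc (R : rcfType) (r : R) : R[i] := Complex r 0.

(* complex-bilinear extension of the Euclidean inner product *)
Definition cdot (R : rcfType) (n : nat) (x y : 'rV[R[i]]_n) : R[i] :=
  \sum_(i < n) x 0 i * y 0 i.

(* asymptotic cone C = {x in C^n : (x,x) = 0} *)
Definition asym_cone (R : rcfType) (n : nat) : pred 'rV[R[i]]_n :=
  fun x => cdot x x == 0.

Definition quad_map (R : rcfType) (n : nat) (c : 'I_n -> 'I_n -> 'I_n -> R)
  (x : 'rV[R[i]]_n) : 'rV[R[i]]_n :=
  \row_k \sum_(i < n) \sum_(j < n) rc (c k i j) * x 0 i * x 0 j.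

Definition rvec (R : rcfType) (n : nat) (b : 'I_n -> R) : 'rV[R[i]]_n :=
  \row_k rc (b k).

Definition rlin (R : rcfType) (n : nat) (l : 'I_n -> R) (x : 'rV[R[i]]_n) : R[i] :=
  \sum_(i < n) rc (l i) * x 0 i.

(* Main.v *)
Require Import Defs.
From HB Require Import structures.
From mathcomp Require Import all_boot all_order all_algebra.
From mathcomp.real_closed Require Import complex.
From mathcomp Require Import ring.
Set Implicit Arguments. Unset Strict Implicit. Unset Printing Implicit Defensive.
Import Order.TTheory GRing.Theory Num.Theory.
Local Open Scope ring_scope.
Local Open Scope complex_scope.

Section Aux.
Variable R : rcfType.
Local Notation I := ('i%C : R[i]).

Lemma rcE (r : R) : rc r = r%:C. Proof. by []. Qed.

Lemma ii : I * I = -1. Proof. by rewrite -expr2 sqr_i. Qed.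

Lemma cplx_eq (a b c d : R) : a%:C + b%:C * I = c%:C + d%:C * I -> a = c /\ b = d.
Proof.
move=> H; have /= H1 := congr1 (@complex.Re R) H; have /= H2 := congr1 (@complex.Im R) H.
move: H1 H2; rewrite !(mulr0, mul0r, mulr1, mul1r, subr0, sub0r, addr0, add0r, oppr0) => H1 H2.
by split.
Qed.

Lemma sum_delta n (F : 'I_n -> R[i]) (p : 'I_n) : \sum_j F j * (j == p)%:R = F p.
Proof.
rewrite (bigD1 p) //= eqxx mulr1 big1 ?addr0 // => j /negbTE ->; by rewrite mulr0.
Qed.

Definition tv n (p q : 'I_n) : 'rV[R[i]]_n := \row_j ((j == p)%:R + (j == q)%:R * I).

Lemma sum_tv n (p q : 'I_n) (F : 'I_n -> R[i]) :
  \sum_j F j * tv p q 0 j = F p + F q * I.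
Proof.
under eq_bigr do rewrite mxE mulrDr mulrA.
by rewrite big_split /= sum_delta -mulr_suml sum_delta.
Qed.

Lemma tv_cone n (p q : 'I_n) : p != q -> tv p q \in @asym_cone R n.
Proof.
move=> pq; have qp : (q == p) = false by rewrite eq_sym (negbTE pq).
rewrite unfold_in /asym_cone /cdot sum_tv !mxE !eqxx qp (negbTE pq) /=.
by rewrite !(addr0, add0r, mul1r, mul0r) ii subrr.
Qed.

Lemma gamma_tv n (c : 'I_n -> 'I_n -> 'I_n -> R) (p q k : 'I_n) :
  quad_map c (tv p q) 0 k = (c k p p - c k q q)%:C + (c k p q + c k q p)%:C * I.
Proof.
rewrite mxE.
under eq_bigr do rewrite sum_tv mulrAC -mulrDl.
rewrite sum_tv !rcE rmorphB rmorphD /=.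
have hz : forall z : R[i], z * I * I = - z by move=> z; rewrite -mulrA ii mulrN1.
rewrite mulrDl hz; ring.
Qed.

Lemma key n (c : 'I_n -> 'I_n -> 'I_n -> R) (p q : 'I_n) : p != q ->
  (forall x : 'rV[R[i]]_n, x \in @asym_cone R n -> ~~ free [:: quad_map c x; x]) ->
  exists a, forall k, quad_map c (tv p q) 0 k = a * tv p q 0 k.
Proof.
move=> pq H; have := H _ (tv_cone pq).
rewrite free_cons seq1_free span_seq1 negb_and !negbK.
case/orP => [/vlineP [a ->] | /eqP x0].
  by exists a => k; rewrite mxE.
have := congr1 (fun m : 'rV[R[i]]_n => m 0 p) x0; rewrite /= !mxE eqxx (negbTE pq) /=.
by move/eqP; rewrite mul0r addr0 oner_eq0.
Qed.

Lemma F1 n (c : 'I_n -> 'I_n -> 'I_n -> R) (p q k : 'I_n) :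
  (forall x : 'rV[R[i]]_n, x \in @asym_cone R n -> ~~ free [:: quad_map c x; x]) ->
  p != q -> k != p -> k != q -> c k p p = c k q q /\ c k p q + c k q p = 0.
Proof.
move=> H pq kp kq; have [a Ha] := key pq H.
move: (Ha k); rewrite gamma_tv mxE (negbTE kp) (negbTE kq) /= mul0r addr0 mulr0.
have -> : (0 : R[i]) = (0 : R)%:C + (0 : R)%:C * I by rewrite mul0r addr0.
by case/cplx_eq => /eqP; rewrite subr_eq0 => /eqP.
Qed.

Lemma F2 n (c : 'I_n -> 'I_n -> 'I_n -> R) (p q : 'I_n) :
  (forall x : 'rV[R[i]]_n, x \in @asym_cone R n -> ~~ free [:: quad_map c x; x]) ->
  p != q -> c q p q + c q q p = c p p p - c p q q.
Proof.
move=> H pq; have [a Ha] := key pq H.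
have qp : (q == p) = false by rewrite eq_sym (negbTE pq).
move: (Ha q) (Ha p); rewrite !gamma_tv !mxE !eqxx qp (negbTE pq) /=.
rewrite !(mul0r, add0r, addr0, mul1r, mulr1) => Eq Ep.
have : (c q p p - c q q q)%:C + (c q p q + c q q p)%:C * I
   = (- (c p p q + c p q p))%:C + (c p p p - c p q q)%:C * I.
  rewrite Eq -Ep mulrDl -mulrA ii mulrN1 rmorphN /=; by rewrite addrC.
by case/cplx_eq.
Qed.

Lemma S1 n (x : 'rV[R[i]]_n) (B : R[i]) :
  \sum_i \sum_j (if i == j then B else 0) * x 0 i * x 0 j = B * \sum_i x 0 i * x 0 i.
Proof.
rewrite mulr_sumr; apply: eq_bigr => i _.
rewrite (bigD1 i) //= eqxx big1 ?addr0 ?mulrA // => j ji.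
by rewrite eq_sym (negbTE ji) !mul0r.
Qed.

Lemma S2 n (x : 'rV[R[i]]_n) (L : 'I_n -> R) k :
  \sum_i \sum_j (if j == k then (L i)%:C else 0) * x 0 i * x 0 j = (\sum_i rc (L i) * x 0 i) * x 0 k.
Proof.
rewrite mulr_suml; apply: eq_bigr => i _.
rewrite (bigD1 k) //= eqxx big1 ?addr0 // => j /negbTE ->; by rewrite !mul0r.
Qed.

Lemma S3 n (x : 'rV[R[i]]_n) (L : 'I_n -> R) k :
  \sum_i \sum_j (if i == k then (L j)%:C else 0) * x 0 i * x 0 j = (\sum_i rc (L i) * x 0 i) * x 0 k.
Proof.
rewrite exchange_big mulr_suml /=; apply: eq_bigr => j _.
rewrite (bigD1 k) //= eqxx big1 ?addr0; first by rewrite mulrAC.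
by move=> i /negbTE ->; rewrite !mul0r.
Qed.

Lemma pair_rc (a b : R) (y z : R[i]) : rc a * y * z + rc b * z * y = rc (a + b) * y * z.
Proof. rewrite !rcE rmorphD /=; ring. Qed.
End Aux.

Theorem lemma3 (R : rcfType) (n : nat) (c : 'I_n -> 'I_n -> 'I_n -> R) :
  (2 <= n)%N ->
  (forall x : 'rV[R[i]]_n, x \in @asym_cone R n ->
     ~~ free [:: quad_map c x; x]) ->
  exists (b : 'I_n -> R) (l : 'I_n -> R),
    forall x : 'rV[R[i]]_n,
      quad_map c x = cdot x x *: rvec b + rlin l x *: x.
Proof.
case: n c => [|[|m]] c //= _ H.
pose i0 (k : 'I_m.+2) : 'I_m.+2 := if k == ord0 then ord_max else ord0.
have i0k k : k != i0 k.
  by rewrite /i0; case: ifP => [/eqP -> // | /negbT].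
pose b k := c k (i0 k) (i0 k).
pose l k := c k k k - b k.
have D k i : i != k -> c k i i = b k.
  move=> ik; rewrite /b; case: (i =P i0 k) => [-> // | /eqP ii0].
  by case: (@F1 _ _ c i (i0 k) k H ii0 (ltac:(by rewrite eq_sym)) (i0k k)).
have T k i j : c k i j + c k j i = (if i == j then 2%:R * b k else 0)
    + (if j == k then l i else 0) + (if i == k then l j else 0).
  case: (i =P j) => [<-|/eqP ij].
    case: (i =P k) => [->|/eqP ik]; first by rewrite /l; ring.
    by rewrite D //; ring.
  case: (j =P k) => [jk|/eqP jk].
    subst j; rewrite (negbTE ij) F2 // (D i k) 1?eq_sym // /l.
    by rewrite add0r addr0.
  case: (i =P k) => [ik|/eqP ik].
    subst i; rewrite addrC F2 1?eq_sym // (D j k) 1?eq_sym // /l.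
    by rewrite !add0r.
  rewrite !addr0.
  by case: (@F1 _ _ c i j k H ij (ltac:(by rewrite eq_sym)) (ltac:(by rewrite eq_sym))).
exists b, l => x; apply/rowP => k; rewrite !mxE.
have two : (2%:R : R[i]) != 0 by rewrite pnatr_eq0.
apply: (mulfI two); rewrite mulr_natl mulr2n.
rewrite [X in _ + X]exchange_big -big_split /=.
under eq_bigr do rewrite -big_split /=.
under eq_bigr do under eq_bigr do rewrite pair_rc T.
under eq_bigr do under eq_bigr do rewrite rcE !rmorphD /= !(fun_if (real_complex R)) rmorph0 !mulrDl.
under eq_bigr do rewrite !big_split /=.
rewrite !big_split /= S1 S2 S3 /cdot /rlin !rcE.
rewrite !mul1r rmorphD /=; ring.
Qed.
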